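(* Consider the asynchronous network Newton method described in the context with $0<\varepsilon\le1$, let $t\ge1$, and set $Q(t-1)=\big(D(t-1)^{-1/2}BD(t-1)^{-1/2}\big)^2$. Then for any $y\in\mathbb{R}^n$ that is $\mathcal{F}_{t-1}$-measurable, $$\mathbb{E}\Big[\big\|\big(I-\varepsilon\Phi(t)+\varepsilon\Phi(t)Q(t-1)\big)y\big\|\;\Big|\;\mathcal{F}_{t-1}\Big]\le\Gamma_2\|y\|,\qquad \Gamma_2=\left(\frac{n-1+(1-\varepsilon+\varepsilon\rho^2)^2}{n}\right)^{1/2}<1 .$$
   Context: Setup. Let $n\ge 1$ be the number of agents and $\alpha>0$ a scalar. $W\in\mathbb{R}^{n\times n}$ is a symmetric nonnegative matrix with $W\mathbb{1}=\mathbb{1}$ (where $\mathbb{1}$ is the all-ones vector), $\mathrm{null}(I-W)=\mathrm{span}\{\mathbb{1}\}$, $0\le W_{ij}<1$ for all $i,j$, and $\delta\le W_{ii}\le\Delta$ for all $i$, for constants $0<\delta\le\Delta<1$. Each $f_i:\mathbb{R}\to\mathbb{R}$ is twice continuously differentiable with $0<m\le f_i''(s)\le M<\infty$ for all $s$ and $|f_i''(a)-f_i''(b)|\le L|a-b|$ for all $a,b$. Define $F(x)=\frac12 x^T(I-W)x+\alpha\sum_{i=1}^n f_i(x_i)$ for $x\in\mathbb{R}^n$, with minimum value $F^*$ and minimizer $x^*$. Let $g(x)=\nabla F(x)$, $G(x)=\mathrm{diag}(f_1''(x_1),\dots,f_n''(x_n))$, $H(x)=\nabla^2F(x)=I-W+\alpha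 G(x)$. Let $W_d$ be the diagonal matrix with $[W_d]_{ii}=W_{ii}$, and set $D(x)=\alpha G(x)+2(I-W_d)$ (diagonal, positive definite) and $B=I-2W_d+W$, so $H(x)=D(x)-B$. Define the approximate Hessian inverse $\hat H(x)^{-1}=D(x)^{-1/2}\big(I+D(x)^{-1/2}BD(x)^{-1/2}\big)D(x)^{-1/2}$. Constants: $\rho=\frac{2(1-\delta)}{2(1-\delta)+\alpha m}$, $\Lambda=\frac{1+\rho}{2(1-\Delta)+\alpha m}$, $\lambda=\frac{1}{2(1-\delta)+\alpha M}$. Algorithm (asynchronous network Newton). Given $x(0)\in\mathbb{R}^n$ and stepsize $\varepsilon>0$, let $\Phi(1),\Phi(2),\dots$ be i.i.d. random diagonal $n\times n$ matrices, each equal to $e_ie_i^T$ (the matrix with a single $1$ in position $(i,i)$ and zeros elsewhere) with probability $1/n$ for each $i=1,\dots,n$ (i.e., one uniformly random agent is active per iteration). The iterates are $x(t)=x(t-1)-\varepsilon\,\Phi(t)\hat H(x(t-1))^{-1}g(x(t-1))$, $t\ge1$. Write $g(t)=g(x(t))$, $D(t)=D(x(t))$, $H(t)=H(x(t))$, $\hat H(t)^{-1}=\hat H(x(t))^{-1}$. $\mathcal{F}_t$ denotes the $\sigma$-field generated by $\Phi(1),\dots,\Phi(t)$ (so $x(t)$ is $\mathcal{F}_t$-measurable). *)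

(* Defs.v *)
(* Stdlib Reals (derivatives of the f_i are needed). Vectors in R^n are
   functions nat -> R (entries 0..n-1 used), n x n matrices are nat -> nat -> R.
   Agents are indexed 0..n-1. *)
From Stdlib Require Import Reals Lra Lia Arith Bool.
Open Scope R_scope.

Definition vec := nat -> R.
Definition mat := nat -> nat -> R.

Fixpoint sumn (n : nat) (f : nat -> R) : R :=
  match n with O => 0 | S k => sumn k f + f k end.

Definition kron (i j : nat) : R := if Nat.eqb i j then 1 else 0.
Definition idm : mat := fun i j => kron i j.
Definition diagm (d : vec) : mat := fun i j => if Nat.eqb i j then d i else 0.
Definition madd (A B : mat) : mat := fun i j => A i j + B i j.
Definition msub (A B : mat) : mat := fun i j => A i j - B i j.
Definition mscal (c : R) (A : mat) : mat := fun i j => c * A i j.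
Definition mmul (n : nat) (A B : mat) : mat :=
  fun i j => sumn n (fun k => A i k * B k j).
Definition mvec (n : nat) (A : mat) (v : vec) : vec :=
  fun i => sumn n (fun j => A i j * v j).
Definition vsub (u v : vec) : vec := fun i => u i - v i.
Definition vscal (c : R) (v : vec) : vec := fun i => c * v i.
Definition vnorm (n : nat) (v : vec) : R := sqrt (sumn n (fun i => v i ^ 2)).

Definition Phi (i : nat) : mat := fun a b => if andb (Nat.eqb a i) (Nat.eqb b i) then 1 else 0.

Section Model.
Variables (n : nat) (W : mat) (alpha : R) (f1 f2 : nat -> R -> R).
(* f1 i = f_i', f2 i = f_i'' *)

(* D(x) = alpha G(x) + 2 (I - W_d) *)
Definition Dd (x : vec) : vec := fun i => alpha * f2 i (x i) + 2 * (1 - W i i).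
Definition Dmhalf (x : vec) : mat := diagm (fun i => / sqrt (Dd x i)).
Definition Bm : mat := fun i j => kron i j - 2 * (kron i j * W i i) + W i j.
Definition Cm (x : vec) : mat := mmul n (Dmhalf x) (mmul n Bm (Dmhalf x)).
Definition Qm (x : vec) : mat := mmul n (Cm x) (Cm x).
Definition Hhatinv (x : vec) : mat :=
  mmul n (Dmhalf x) (mmul n (madd idm (Cm x)) (Dmhalf x)).
Definition grad (x : vec) : vec :=
  fun i => x i - sumn n (fun j => W i j * x j) + alpha * f1 i (x i).

(* Sample path: omega s is the agent active at iteration s (s >= 1),
   i.e. Phi(s) = Phi (omega s). *)
Fixpoint iterate (eps : R) (x0 : vec) (omega : nat -> nat) (t : nat) : vec :=
  match t with
  | O => x0
  | S k => let xk := iterate eps x0 omega k in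
           vsub xk (vscal eps (mvec n (Phi (omega (S k)))
                                 (mvec n (Hhatinv xk) (grad xk))))
  end.
End Model.

Definition valid_path (n : nat) (omega : nat -> nat) : Prop :=
  forall s, (omega s < n)%nat.

(* A random vector on paths is F_k-measurable iff it only depends on
   Phi(1),...,Phi(k). *)
Definition F_measurable (n k : nat) (y : (nat -> nat) -> vec) : Prop :=
  forall om om', valid_path n om -> valid_path n om' ->
    (forall s, (1 <= s <= k)%nat -> om s = om' s) -> y om = y om'.

Definition upd (omega : nat -> nat) (t i : nat) : nat -> nat :=
  fun s => if Nat.eqb s t then i else omega s.

(* E[ Z | F_{t-1} ](omega), for Z depending on Phi(1..t): Phi(t) is uniform on
   {e_i e_i^T} and independent of F_{t-1}. *)
Definition condexp (n t : nat) (Z : (nat -> nat) -> R) (omega : nat -> nat) : R :=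
  / INR n * sumn n (fun i => Z (upd omega t i)).

(* Main.v *)
Require Import Defs.
From Stdlib Require Import Reals Lra Lia Arith Psatz.
Open Scope R_scope.

Lemma sumn_ext n f g : (forall k, (k < n)%nat -> f k = g k) -> sumn n f = sumn n g.
Proof. induction n; simpl; intros H; [reflexivity|]. rewrite IHn by (intros; apply H; lia). rewrite H by lia. reflexivity. Qed.

Lemma sumn_plus n f g : sumn n (fun k => f k + g k) = sumn n f + sumn n g.
Proof. induction n; simpl; [lra|]. rewrite IHn; lra. Qed.

Lemma sumn_scal n c f : sumn n (fun k => c * f k) = c * sumn n f.
Proof. induction n; simpl; [lra|]. rewrite IHn; lra. Qed.

Lemma sumn_zero n : sumn n (fun _ => 0) = 0.
Proof. induction n; simpl; [lra|]. rewrite IHn; lra. Qed.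

Lemma sumn_const n c : sumn n (fun _ => c) = INR n * c.
Proof. induction n; simpl sumn; [simpl; lra|]. rewrite IHn, S_INR; lra. Qed.

Lemma sumn_le n f g : (forall k, (k<n)%nat -> f k <= g k) -> sumn n f <= sumn n g.
Proof. induction n; simpl; intros H; [lra|].
  assert (sumn n f <= sumn n g) by (apply IHn; intros; apply H; lia).
  specialize (H n ltac:(lia)). lra. Qed.

Lemma sumn_nonneg n f : (forall k, (k<n)%nat -> 0 <= f k) -> 0 <= sumn n f.
Proof. intros H. rewrite <- (sumn_zero n). apply sumn_le; auto. Qed.

Lemma sumn_swap n m (f : nat -> nat -> R) :
  sumn n (fun i => sumn m (fun j => f i j)) = sumn m (fun j => sumn n (fun i => f i j)).
Proof. induction n; simpl.
  - rewrite sumn_zero; reflexivity.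
  - rewrite IHn, <- sumn_plus. reflexivity. Qed.

Lemma sumn_delta n i g : (i < n)%nat ->
  sumn n (fun k => if Nat.eqb k i then g k else 0) = g i.
Proof.
  induction n; intros Hi; [lia|]. simpl.
  destruct (Nat.eq_dec i n) as [->|Hne].
  - rewrite Nat.eqb_refl. rewrite (sumn_ext n _ (fun _ => 0)). rewrite sumn_zero; lra.
    intros k Hk. destruct (Nat.eqb_spec k n); [lia|reflexivity].
  - rewrite IHn by lia. destruct (Nat.eqb_spec n i); [lia|lra].
Qed.

Lemma wcs n b u : (forall k, (k<n)%nat -> 0 <= b k) ->
  (sumn n (fun k => b k * u k))^2 <= sumn n b * sumn n (fun k => b k * u k ^ 2).
Proof.
  induction n; intros Hb; cbn [sumn]; [nra|].
  assert (IH := IHn ltac:(intros; apply Hb; lia)).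
  assert (Hn := Hb n ltac:(lia)).
  set (x := u n) in *.
  assert (Hid : sumn n (fun k => b k * (u k - x)^2) = sumn n (fun k => b k * u k ^ 2) - 2 * x * sumn n (fun k => b k * u k) + x^2 * sumn n b).
  { rewrite (sumn_ext n _ (fun k => b k * u k ^2 + ((-2 * x) * (b k * u k) + x^2 * b k))) by (intros; ring).
    rewrite !sumn_plus, !sumn_scal. ring. }
  assert (Hpos : 0 <= sumn n (fun k => b k * (u k - x)^2)).
  { apply sumn_nonneg. intros k Hk. apply Rmult_le_pos; [apply Hb; lia| apply pow2_ge_0]. }
  set (B := sumn n b) in *. set (U1 := sumn n (fun k => b k * u k)) in *.
  set (U2 := sumn n (fun k => b k * u k ^ 2)) in *.
  assert (0 <= b n * (U2 - 2*x*U1 + x^2*B)) by (apply Rmult_le_pos; lra).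
  match goal with |- ?L <= ?R => assert (R - L = (B*U2 - U1^2) + b n * (U2 - 2*x*U1 + x^2*B)) by (unfold x; ring) end.
  lra.
Qed.

Lemma sq_le a b : 0 <= b -> a^2 <= b^2 -> a <= b.
Proof. intros. destruct (Rle_dec a b); auto. nra. Qed.

Definition sq n (v : vec) := sumn n (fun i => v i ^ 2).

Lemma sq_nonneg n v : 0 <= sq n v.
Proof. apply sumn_nonneg; intros; apply pow2_ge_0. Qed.

Lemma schur n (C : mat) (p : vec) rho :
  0 <= rho ->
  (forall i j, (i<n)%nat -> (j<n)%nat -> 0 <= C i j) ->
  (forall i j, (i<n)%nat -> (j<n)%nat -> C i j = C j i) ->
  (forall i, (i<n)%nat -> 0 < p i) ->
  (forall i, (i<n)%nat -> sumn n (fun j => C i j * p j) <= rho * p i) ->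
  forall v, sq n (mvec n C v) <= rho^2 * sq n v.
Proof.
  intros Hr Hnn Hsym Hp Hrow v. unfold sq, mvec.
  apply Rle_trans with (sumn n (fun i => rho * p i * sumn n (fun j => C i j * (v j ^2 / p j)))).
  - apply sumn_le. intros i Hi.
    assert (E: sumn n (fun j => C i j * v j) = sumn n (fun j => (C i j * p j) * (v j / p j))).
    { apply sumn_ext. intros j Hj. field. apply Rgt_not_eq, Hp; auto. }
    rewrite E.
    apply Rle_trans with (sumn n (fun j => C i j * p j) * sumn n (fun j => C i j * p j * (v j / p j)^2)).
    { apply (wcs n (fun j => C i j * p j) (fun j => v j / p j)).
      intros j Hj. apply Rmult_le_pos; [auto| left; auto]. }
    rewrite (sumn_ext n (fun j => C i j * p j * (v j / p j) ^ 2) (fun j => C i j * (v j ^ 2 / p j))).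
    2:{ intros j Hj. field. apply Rgt_not_eq, Hp; auto. }
    apply Rmult_le_compat_r.
    + apply sumn_nonneg. intros j Hj. apply Rmult_le_pos; [auto|].
      unfold Rdiv; apply Rmult_le_pos; [apply pow2_ge_0| left; apply Rinv_0_lt_compat; auto].
    + apply Hrow; auto.
  - rewrite (sumn_ext n _ (fun i => sumn n (fun j => rho * (p i * C i j * (v j ^ 2 / p j))))).
    2:{ intros i Hi. rewrite <- sumn_scal. apply sumn_ext; intros; ring. }
    rewrite sumn_swap. rewrite <- sumn_scal.
    apply sumn_le. intros j Hj.
    rewrite (sumn_ext n _ (fun i => (rho * (v j^2/p j)) * (C j i * p i))).
    2:{ intros i Hi. rewrite (Hsym i j) by auto. ring. }
    rewrite sumn_scal.
    assert (Hpj := Hp j Hj).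
    apply Rle_trans with (rho * (v j^2/p j) * (rho * p j)).
    + apply Rmult_le_compat_l; [|apply Hrow; auto].
      apply Rmult_le_pos; auto. unfold Rdiv; apply Rmult_le_pos; [apply pow2_ge_0| left; apply Rinv_0_lt_compat; auto].
    + right; field; lra.
Qed.

Lemma dot_sym n (C : mat) (u v : vec) :
  (forall i j, (i<n)%nat -> (j<n)%nat -> C i j = C j i) ->
  sumn n (fun i => u i * mvec n C v i) = sumn n (fun i => mvec n C u i * v i).
Proof. intros Hs. unfold mvec.
  transitivity (sumn n (fun i => sumn n (fun j => u i * C i j * v j))).
  { apply sumn_ext; intros i Hi. rewrite <- sumn_scal. apply sumn_ext; intros; ring. }
  rewrite sumn_swap. apply sumn_ext; intros j Hj.
  transitivity (v j * sumn n (fun i => C j i * u i)); [|ring].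
  rewrite <- sumn_scal. apply sumn_ext; intros i Hi. rewrite (Hs i j) by auto. ring.
Qed.

Lemma mvec_mmul n A B v i : mvec n (mmul n A B) v i = mvec n A (mvec n B v) i.
Proof. unfold mvec, mmul.
  transitivity (sumn n (fun j => sumn n (fun k => A i k * B k j * v j))).
  { apply sumn_ext; intros j Hj.
    transitivity (v j * sumn n (fun k => A i k * B k j)); [ring|].
    rewrite <- sumn_scal. apply sumn_ext; intros; ring. }
  rewrite sumn_swap. apply sumn_ext; intros k Hk. rewrite <- sumn_scal. apply sumn_ext; intros; ring.
Qed.

Lemma mmul_diag_l n d (A : mat) i j : (i < n)%nat -> mmul n (diagm d) A i j = d i * A i j.
Proof. intros Hi. unfold mmul, diagm.
  rewrite (sumn_ext n _ (fun k => if Nat.eqb k i then d i * A k j else 0)).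
  - apply (sumn_delta n i (fun k => d i * A k j)); auto.
  - intros k Hk. destruct (Nat.eqb_spec i k); destruct (Nat.eqb_spec k i); subst; try lia; ring.
Qed.

Lemma mmul_diag_r n d (A : mat) i j : (j < n)%nat -> mmul n A (diagm d) i j = A i j * d j.
Proof. intros Hj. unfold mmul, diagm.
  rewrite (sumn_ext n _ (fun k => if Nat.eqb k j then A i k * d k else 0)).
  - apply (sumn_delta n j (fun k => A i k * d k)); auto.
  - intros k Hk. destruct (Nat.eqb_spec k j); subst; ring.
Qed.

Lemma Cm_entry n W alpha f2 x i j : (i < n)%nat -> (j < n)%nat ->
  Cm n W alpha f2 x i j = / sqrt (Dd W alpha f2 x i) * (Bm W i j * / sqrt (Dd W alpha f2 x j)).
Proof. intros. unfold Cm, Dmhalf. rewrite mmul_diag_l by auto. rewrite mmul_diag_r by auto. reflexivity. Qed.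

Lemma Bm_sym W i j : (W i j = W j i) -> Bm W i j = Bm W j i.
Proof. intros H. unfold Bm, kron. destruct (Nat.eqb_spec i j), (Nat.eqb_spec j i); subst; try lia; lra. Qed.

Lemma Bm_nonneg W i j : W i i < 1 -> 0 <= W i j -> 0 <= Bm W i j.
Proof. intros. unfold Bm, kron. destruct (Nat.eqb_spec i j); subst; lra. Qed.

Lemma Bm_row n W i : (i < n)%nat -> sumn n (fun j => W i j) = 1 ->
  sumn n (fun j => Bm W i j) = 2 * (1 - W i i).
Proof. intros Hi Hr. unfold Bm.
  rewrite (sumn_ext n _ (fun j => (if Nat.eqb j i then 1 - 2 * W i i else 0) + W i j)).
  - assert (Hr' : sumn n (W i) = 1) by exact Hr.
    rewrite sumn_plus. first [rewrite Hr | rewrite Hr']. rewrite (sumn_delta n i (fun _ => 1 - 2 * W i i)) by auto. ring.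
  - intros j Hj. unfold kron. destruct (Nat.eqb_spec i j), (Nat.eqb_spec j i); subst; try lia; ring.
Qed.

Lemma iterate_dep n W alpha f1 f2 eps x0 k om om' :
  (forall s, (1 <= s <= k)%nat -> om s = om' s) ->
  iterate n W alpha f1 f2 eps x0 om k = iterate n W alpha f1 f2 eps x0 om' k.
Proof. induction k; intros H; simpl; [reflexivity|].
  rewrite IHk by (intros; apply H; lia). rewrite H by lia. reflexivity. Qed.

Lemma entry_M n eps i (Q : mat) (v : vec) j : (i < n)%nat -> (j < n)%nat ->
  mvec n (madd (msub idm (mscal eps (Phi i))) (mscal eps (mmul n (Phi i) Q))) v j
  = v j + (if Nat.eqb j i then eps * (mvec n Q v i - v i) else 0).
Proof. intros Hi Hj. unfold mvec, madd, msub, mscal, idm.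
  rewrite (sumn_ext n _ (fun k => kron j k * v k + ((-eps) * (Phi i j k * v k) + eps * (mmul n (Phi i) Q j k * v k)))) by (intros; ring).
  rewrite !sumn_plus, !sumn_scal.
  rewrite (sumn_ext n (fun k => kron j k * v k) (fun k => if Nat.eqb k j then v k else 0)).
  2:{ intros k Hk. unfold kron. destruct (Nat.eqb_spec j k), (Nat.eqb_spec k j); subst; try lia; ring. }
  rewrite (sumn_delta n j v) by auto.
  destruct (Nat.eqb_spec j i) as [->|Hne].
  - rewrite (sumn_ext n (fun k => Phi i i k * v k) (fun k => if Nat.eqb k i then v k else 0)).
    2:{ intros k Hk. unfold Phi. rewrite Nat.eqb_refl. simpl. destruct (Nat.eqb k i); ring. }
    rewrite (sumn_delta n i v) by auto.
    rewrite (sumn_ext n (fun k => mmul n (Phi i) Q i k * v k) (fun k => Q i k * v k)).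
    2:{ intros k Hk. unfold mmul, Phi. rewrite Nat.eqb_refl. simpl.
        rewrite (sumn_ext n _ (fun l => if Nat.eqb l i then Q l k else 0)).
        - rewrite (sumn_delta n i (fun l => Q l k)) by auto. reflexivity.
        - intros l Hl. destruct (Nat.eqb l i); ring. }
    ring.
  - assert (E : Nat.eqb j i = false) by (apply Nat.eqb_neq; auto).
    rewrite (sumn_ext n (fun k => Phi i j k * v k) (fun _ => 0)).
    2:{ intros k Hk. unfold Phi. rewrite E. simpl. ring. }
    rewrite (sumn_ext n (fun k => mmul n (Phi i) Q j k * v k) (fun _ => 0)).
    2:{ intros k Hk. unfold mmul, Phi. rewrite E. simpl.
        rewrite (sumn_ext n _ (fun _ => 0)) by (intros; ring). rewrite sumn_zero. ring. }
    rewrite !sumn_zero. ring.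
Qed.

Lemma sq_bump n (v : vec) i e : (i < n)%nat ->
  sq n (fun j => v j + (if Nat.eqb j i then e else 0)) = sq n v + 2 * v i * e + e ^ 2.
Proof. intros Hi. unfold sq.
  rewrite (sumn_ext n _ (fun j => v j ^ 2 + (if Nat.eqb j i then 2 * v j * e + e ^ 2 else 0))).
  - rewrite sumn_plus. rewrite (sumn_delta n i (fun j => 2 * v j * e + e ^ 2)) by auto. ring.
  - intros j Hj. destruct (Nat.eqb j i); ring.
Qed.

Lemma upd_t (omega : nat -> nat) t i : upd omega t i t = i.
Proof. unfold upd. rewrite Nat.eqb_refl. reflexivity. Qed.

Theorem mainTheorem5
  (n : nat) (alpha delta Delta m M L eps : R)
  (W : mat) (f f1 f2 : nat -> R -> R) (x0 : vec)
  (Hn : (1 <= n)%nat) (Halpha : 0 < alpha)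
  (HWsym : forall i j, (i < n)%nat -> (j < n)%nat -> W i j = W j i)
  (HWnn : forall i j, (i < n)%nat -> (j < n)%nat -> 0 <= W i j)
  (HWlt1 : forall i j, (i < n)%nat -> (j < n)%nat -> W i j < 1)
  (HWrow : forall i, (i < n)%nat -> sumn n (fun j => W i j) = 1)
  (HWnull : forall v : vec,
      (forall i, (i < n)%nat -> v i - sumn n (fun j => W i j * v j) = 0) ->
      exists c, forall i, (i < n)%nat -> v i = c)
  (Hdelta : 0 < delta) (HdD : delta <= Delta) (HDelta : Delta < 1)
  (HWdiag : forall i, (i < n)%nat -> delta <= W i i <= Delta)
  (Hf1 : forall i s, (i < n)%nat -> derivable_pt_lim (f i) s (f1 i s))
  (Hf2 : forall i s, (i < n)%nat -> derivable_pt_lim (f1 i) s (f2 i s))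
  (Hf2c : forall i, (i < n)%nat -> continuity (f2 i))
  (Hm : 0 < m) (HmM : forall i s, (i < n)%nat -> m <= f2 i s <= M)
  (HL : forall i a b, (i < n)%nat -> Rabs (f2 i a - f2 i b) <= L * Rabs (a - b))
  (Heps : 0 < eps <= 1)
  (t : nat) (Ht : (1 <= t)%nat)
  (y : (nat -> nat) -> vec) (Hy : F_measurable n (t - 1) y) :
  let rho := 2 * (1 - delta) / (2 * (1 - delta) + alpha * m) in
  let Gamma2 := sqrt ((INR n - 1 + (1 - eps + eps * rho ^ 2) ^ 2) / INR n) in
  (forall omega, valid_path n omega ->
     condexp n t
       (fun om =>
          let xprev := iterate n W alpha f1 f2 eps x0 om (t - 1) in
          vnorm n (mvec n
                     (madd (msub idm (mscal eps (Phi (om t))))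
                           (mscal eps (mmul n (Phi (om t)) (Qm n W alpha f2 xprev))))
                     (y om)))
       omega
     <= Gamma2 * vnorm n (y omega))
  /\ Gamma2 < 1.
Proof.
  intros rho Gamma2.
  assert (HnR : 1 <= INR n) by (replace 1 with (INR 1) by reflexivity; apply le_INR; lia).
  assert (HK : 0 < 2 * (1 - delta) + alpha * m) by nra.
  assert (Hrho0 : 0 <= rho).
  { unfold rho, Rdiv. apply Rmult_le_pos; [lra| left; apply Rinv_0_lt_compat; lra]. }
  assert (Hrho1 : rho < 1).
  { unfold rho. apply (Rmult_lt_reg_r (2 * (1 - delta) + alpha * m)); [lra|].
    unfold Rdiv. rewrite Rmult_assoc, Rinv_l by lra. nra. }
  set (c := 1 - eps + eps * rho ^ 2) in *.
  assert (Hc0 : 0 <= c) by (unfold c; nra).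
  assert (Hr2 : rho ^ 2 < 1) by nra.
  assert (0 < eps * (1 - rho ^ 2)) by (apply Rmult_lt_0_compat; lra).
  assert (Hc1 : c < 1) by (unfold c; lra).
  set (G := (INR n - 1 + c ^ 2) / INR n) in *.
  assert (HG0 : 0 <= G).
  { unfold G, Rdiv. apply Rmult_le_pos; [nra| left; apply Rinv_0_lt_compat; lra]. }
  split.
  2:{ unfold Gamma2. rewrite <- sqrt_1. apply sqrt_lt_1_alt. split; auto.
      unfold G. apply (Rmult_lt_reg_r (INR n)); [lra|].
      unfold Rdiv. rewrite Rmult_assoc, Rinv_l by lra. nra. }
  intros omega Hom. unfold condexp.
  destruct t as [|k]; [lia|]. replace (S k - 1)%nat with k in * by lia.
  set (x := iterate n W alpha f1 f2 eps x0 omega k).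
  set (Y := y omega).
  set (C := Cm n W alpha f2 x).
  set (Qy := mvec n (Qm n W alpha f2 x) Y).
  set (z := fun i j => Y j + (if Nat.eqb j i then eps * (Qy i - Y i) else 0)).
  rewrite (sumn_ext n _ (fun i => sqrt (sq n (z i)))).
  2:{ intros i Hi. cbv beta zeta.
      assert (Hv : valid_path n (upd omega (S k) i)).
      { intros s. unfold upd. destruct (Nat.eqb s (S k)); auto. }
      rewrite (iterate_dep n W alpha f1 f2 eps x0 k (upd omega (S k) i) omega).
      2:{ intros s Hs. unfold upd. destruct (Nat.eqb_spec s (S k)); [lia|reflexivity]. }
      fold x. rewrite upd_t.
      rewrite (Hy (upd omega (S k) i) omega Hv Hom).
      2:{ intros s Hs. unfold upd. destruct (Nat.eqb_spec s (S k)); [lia|reflexivity]. }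
      fold Y. unfold vnorm. f_equal. unfold sq. apply sumn_ext. intros j Hj.
      rewrite entry_M by auto. reflexivity. }
  assert (HD : forall i, (i < n)%nat -> 0 < Dd W alpha f2 x i).
  { intros i Hi. unfold Dd. specialize (HmM i (x i) Hi). specialize (HWlt1 i i Hi Hi). nra. }
  assert (HCb : forall v, sq n (mvec n C v) <= rho ^ 2 * sq n v).
  { apply schur with (p := fun i => sqrt (Dd W alpha f2 x i)); auto.
    - intros i j Hi Hj. unfold C. rewrite Cm_entry by auto.
      assert (0 < sqrt (Dd W alpha f2 x i)) by (apply sqrt_lt_R0; auto).
      assert (0 < sqrt (Dd W alpha f2 x j)) by (apply sqrt_lt_R0; auto).
      assert (0 <= Bm W i j) by (apply Bm_nonneg; auto).
      apply Rmult_le_pos; [left; apply Rinv_0_lt_compat; auto|].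
      apply Rmult_le_pos; [auto| left; apply Rinv_0_lt_compat; auto].
    - intros i j Hi Hj. unfold C. rewrite !Cm_entry by auto. rewrite (Bm_sym W i j) by auto. ring.
    - intros i Hi. apply sqrt_lt_R0; auto.
    - intros i Hi. unfold C.
      assert (Hsi : 0 < sqrt (Dd W alpha f2 x i)) by (apply sqrt_lt_R0; auto).
      rewrite (sumn_ext n _ (fun j => / sqrt (Dd W alpha f2 x i) * Bm W i j)).
      2:{ intros j Hj. rewrite Cm_entry by auto.
          assert (0 < sqrt (Dd W alpha f2 x j)) by (apply sqrt_lt_R0; auto).
          field. lra. }
      rewrite sumn_scal, Bm_row by auto.
      apply (Rmult_le_reg_r (sqrt (Dd W alpha f2 x i))); auto.
      replace (/ sqrt (Dd W alpha f2 x i) * (2 * (1 - W i i)) * sqrt (Dd W alpha f2 x i))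
        with (2 * (1 - W i i)) by (field; lra).
      rewrite Rmult_assoc, sqrt_sqrt by (left; auto).
      assert (HR : 0 <= 2 * (1 - W i i) <= 2 * (1 - delta)).
      { specialize (HWdiag i Hi). specialize (HWlt1 i i Hi Hi). lra. }
      assert (Hf := HmM i (x i) Hi).
      unfold Dd, rho.
      set (K := 2 * (1 - delta) + alpha * m) in *.
      assert (Hkey : 2 * (1 - W i i) * K <= 2 * (1 - delta) * (alpha * f2 i (x i) + 2 * (1 - W i i))).
      { unfold K. assert (2 * (1 - W i i) * (alpha * m) <= 2 * (1 - delta) * (alpha * f2 i (x i))).
        { apply Rmult_le_compat; nra. }
        nra. }
      apply (Rmult_le_reg_r K); [lra|].
      replace (2 * (1 - delta) / K * (alpha * f2 i (x i) + 2 * (1 - W i i)) * K)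
        with (2 * (1 - delta) * (alpha * f2 i (x i) + 2 * (1 - W i i))) by (field; lra).
      lra. }
  assert (HCsym : forall i j, (i<n)%nat -> (j<n)%nat -> C i j = C j i).
  { intros i j Hi Hj. unfold C. rewrite !Cm_entry by auto. rewrite (Bm_sym W i j) by auto. ring. }
  set (CY := mvec n C Y).
  assert (HQy : forall i, Qy i = mvec n C CY i).
  { intros i. unfold Qy, Qm, CY. fold C. apply mvec_mmul. }
  assert (HP : sumn n (fun i => Y i * Qy i) = sq n CY).
  { rewrite (sumn_ext n _ (fun i => Y i * mvec n C CY i)) by (intros; rewrite HQy; auto).
    rewrite dot_sym by auto. unfold sq. apply sumn_ext; intros; fold CY; ring. }
  assert (HT : sq n Qy <= rho ^ 2 * sq n CY).
  { replace (sq n Qy) with (sq n (mvec n C CY)) by (unfold sq; apply sumn_ext; intros; rewrite HQy; auto).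
    apply HCb. }
  assert (HCY : sq n CY <= rho ^ 2 * sq n Y) by apply HCb.
  set (w := fun i => (1 - eps) * Y i + eps * Qy i).
  assert (Hw : sq n w <= c ^ 2 * sq n Y).
  { assert (E : sq n w = (1 - eps) ^ 2 * sq n Y + 2 * (1 - eps) * eps * sumn n (fun i => Y i * Qy i) + eps ^ 2 * sq n Qy).
    { unfold sq, w. rewrite <- !sumn_scal, <- !sumn_plus. apply sumn_ext; intros; ring. }
    rewrite E, HP.
    assert (0 <= 2 * (1 - eps) * eps) by nra.
    assert (2 * (1 - eps) * eps * sq n CY <= 2 * (1 - eps) * eps * (rho ^ 2 * sq n Y)) by (apply Rmult_le_compat_l; auto).
    assert (eps ^ 2 * sq n Qy <= eps ^ 2 * (rho ^ 2 * (rho ^ 2 * sq n Y))).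
    { apply Rmult_le_compat_l; [nra|]. apply Rle_trans with (rho ^ 2 * sq n CY); auto.
      apply Rmult_le_compat_l; [nra|auto]. }
    unfold c. nra. }
  assert (HN2 : sumn n (fun i => sqrt (sq n (z i)) ^ 2) <= (INR n - 1 + c ^ 2) * sq n Y).
  { rewrite (sumn_ext n _ (fun i => sq n Y + (- (Y i ^ 2) + w i ^ 2))).
    2:{ intros i Hi. rewrite pow2_sqrt by apply sq_nonneg. unfold z. rewrite sq_bump by auto.
        unfold w. ring. }
    rewrite !sumn_plus, sumn_const.
    rewrite (sumn_ext n (fun i => - (Y i ^ 2)) (fun i => -1 * Y i ^ 2)) by (intros; ring).
    rewrite sumn_scal. fold (sq n Y). fold (sq n w). nra. }
  assert (HCS := wcs n (fun _ => 1) (fun i => sqrt (sq n (z i))) ltac:(intros; lra)).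
  rewrite sumn_const in HCS.
  rewrite (sumn_ext n (fun k => 1 * sqrt (sq n (z k))) (fun k => sqrt (sq n (z k)))) in HCS by (intros; ring).
  rewrite (sumn_ext n (fun k => 1 * sqrt (sq n (z k)) ^ 2) (fun k => sqrt (sq n (z k)) ^ 2)) in HCS by (intros; ring).
  set (S := sumn n (fun i => sqrt (sq n (z i)))) in *.
  assert (HS0 : 0 <= S) by (apply sumn_nonneg; intros; apply sqrt_pos).
  unfold Gamma2. fold c. fold G. unfold vnorm. fold (sq n Y).
  apply sq_le.
  - apply Rmult_le_pos; apply sqrt_pos.
  - rewrite (Rpow_mult_distr (sqrt G) (sqrt (sq n Y))), !pow2_sqrt by (auto; apply sq_nonneg).
    assert (HYn : 0 <= sq n Y) by apply sq_nonneg.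
    unfold G. 
    replace ((/ INR n * S) ^ 2) with (S ^ 2 / (INR n * INR n)) by (field; lra).
    apply Rle_trans with ((INR n * 1 * ((INR n - 1 + c ^ 2) * sq n Y)) / (INR n * INR n)).
    + unfold Rdiv. apply Rmult_le_compat_r; [left; apply Rinv_0_lt_compat; nra|].
      apply Rle_trans with (INR n * 1 * sumn n (fun i => sqrt (sq n (z i)) ^ 2)); auto.
      apply Rmult_le_compat_l; [lra|auto].
    + right. field. lra.
Qed.
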